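(* Let $\{\mathcal{T}^\pi\}_{\pi\in\Pi}$ be a consistency operator, i.e. a family of maps $\mathcal{T}^\pi:\mathbb{R}^{\mathcal{S}}\to\mathbb{R}^{\mathcal{S}}$ indexed by policies $\pi\in\Pi$. (i) If $\mathcal{T}^\pi$ is linear, then it enables the greedy policy. (ii) If $\mathcal{T}^\pi$ enables the greedy policy, then there exists a linear consistency operator $\mathcal{T}^\pi_{\mathrm{linear}}$ such that for all $v\in\mathbb{R}^{\mathcal{S}}$ and $s\in\mathcal{S}$, $\max_{\pi\in\Pi}[\mathcal{T}^\pi v](s) = \max_{\pi\in\Pi}[\mathcal{T}^\pi_{\mathrm{linear}} v](s)$.
   Context: $\mathcal{S},\mathcal{A}$ are finite sets and $\Pi = \Delta(\mathcal{A})^{\mathcal{S}}$ is the set of all stationary (stochastic and deterministic) policies, a policy being $\pi\in\mathbb{R}^{\mathcal{S}\times\mathcal{A}}$ with $\pi[s,\cdot]\in\Delta(\mathcal{A})$ for each $s$. A consistency operator $\mathcal{T}^\pi$ enables the greedy policy if there is a function $g:\mathbb{R}^{\mathcal{S}}\times\mathcal{A}\to\mathbb{R}^{\mathcal{S}}$ such that for all $v\in\mathbb{R}^{\mathcal{S}}$ and $s\in\mathcal{S}$, $\max_{a\in\mathcal{A}} g(v,a)[s] = \max_{\pi\in\Pi}[\mathcal{T}^\pi v](s)$. It is linear if there is a function $f:\mathbb{R}^{\mathcal{S}}\to\mathbb{R}^{\mathcal{S}\times\mathcal{A}}$, independent of $\pi$, such that for all $\pi\in\Pi$, $v\in\mathbb{R}^{\mathcal{S}}$,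 $s\in\mathcal{S}$: $[\mathcal{T}^\pi v](s) = \langle \pi[s,\cdot], f(v)[s,\cdot]\rangle$. *)

(* Defs.v *)
From HB Require Import structures.
From mathcomp Require Import all_boot all_order all_algebra.
From mathcomp Require Import reals.
Set Implicit Arguments. Unset Strict Implicit. Unset Printing Implicit Defensive.
Import Order.TTheory GRing.Theory Num.Theory.
Local Open Scope ring_scope.

Section Defs.
Variables (R : realType) (S A : finType).

Definition is_policy (pi : S -> A -> R) : Prop :=
  forall s, (forall a, 0 <= pi s a) /\ \sum_(a : A) pi s a = 1.

(* A consistency operator: a family T^pi : R^S -> R^S indexed by policies
   (values at non-policies are irrelevant). *)
Definition cons_op := (S -> A -> R) -> (S -> R) -> (S -> R).

Definition is_max (P : R -> Prop) (m : R) : Prop :=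
  P m /\ forall x, P x -> x <= m.

Definition pol_vals (T : cons_op) (v : S -> R) (s : S) : R -> Prop :=
  fun x => exists pi, is_policy pi /\ x = T pi v s.

Definition enables_greedy (T : cons_op) : Prop :=
  exists g : (S -> R) -> A -> S -> R,
    forall v s, exists m,
      is_max (fun x => exists a, x = g v a s) m /\ is_max (pol_vals T v s) m.

Definition linear_op (T : cons_op) : Prop :=
  exists f : (S -> R) -> S -> A -> R,
    forall pi, is_policy pi -> forall v s,
      T pi v s = \sum_(a : A) pi s a * f v s a.
End Defs.

(* Main.v *)
Require Import Defs.
From HB Require Import structures.
From mathcomp Require Import all_boot all_order all_algebra.
From mathcomp Require Import reals.
Import Order.TTheory GRing.Theory Num.Theory.
Local Open Scope ring_scope.

Lemma max_exists (R : realType) (A : finType) (a0 : A) (h : A -> R) :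
  exists m, is_max (fun x => exists a, x = h a) m.
Proof.
case: (@arg_maxP _ R A a0 predT h isT) => b _ Hb.
exists (h b); split; first by exists b.
by move=> x [a ->]; apply: Hb.
Qed.

Lemma lin_max (R : realType) (S A : finType) (F : S -> A -> R) (s : S) (m : R) :
  is_max (fun x => exists a, x = F s a) m ->
  is_max (fun x => exists pi, is_policy pi /\ x = \sum_(a : A) pi s a * F s a) m.
Proof.
move=> [[b ->] Hb]; split.
  exists (fun _ a => (a == b)%:R); split.
    move=> s'; split; first by move=> a; rewrite ler0n.
    rewrite (bigD1 b) //= eqxx big1 ?addr0 // => a /negbTE -> //.
  rewrite (bigD1 b) //= eqxx mul1r big1 ?addr0 // => a /negbTE ->; by rewrite mul0r.
move=> x [pi [Hpi ->]].
have [H0 H1] := Hpi s.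
apply: (@le_trans _ _ (\sum_(a : A) pi s a * F s b)).
  apply: ler_sum => a _; apply: ler_wpM2l => //; apply: Hb; by exists a.
by rewrite -mulr_suml H1 mul1r.
Qed.

Theorem lemma1 (R : realType) (S A : finType) (a0 : A) (T : cons_op R S A) :
  (linear_op T -> enables_greedy T) /\
  (enables_greedy T ->
     exists Tlin : cons_op R S A, linear_op Tlin /\
       forall v s, exists m, is_max (pol_vals T v s) m /\ is_max (pol_vals Tlin v s) m).
Proof.
split.
  move=> [f Hf]; exists (fun v a s => f v s a) => v s.
  have [m Hm] := @max_exists R A a0 (fun a => f v s a).
  exists m; split => //.
  have [[pi [Hpi ->]] Hub] := @lin_max R S A (f v) s m Hm.
  split; first by exists pi; split => //; rewrite Hf.
  move=> y [pi' [Hpi' ->]]; rewrite Hf //; apply: Hub; by exists pi'.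
move=> [g Hg].
exists (fun pi v s => \sum_(a : A) pi s a * g v a s); split.
  by exists (fun v s a => g v a s).
move=> v s; have [m [Hm1 Hm2]] := Hg v s.
exists m; split => //.
exact: (@lin_max R S A (fun s a => g v a s) s m Hm1).
Qed.
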